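(* Let $H$ be a finite-dimensional real Hilbert space and let $A = A_1 + A_2$, where $A_1, A_2: H\to H$ are linear operators with $A_1 = A_2^*$, and $A=A^*>0$. Let $\sigma\ge 1/2$, $\tau>0$, and let $y^0,y^1\in H$ be arbitrary and $\varphi^n\in H$. Let $y^{n+1}$, $n\ge1$, be defined by the three-level (multilevel alternating triangle method) scheme $$(E+\sigma\tau A)\frac{y^{n+1}-y^n}{\tau} + \sigma^2\tau^3 A_1A_2\,\frac{y^{n+1}-2y^n+y^{n-1}}{\tau^2} + A y^n = \varphi^n,\quad n=1,2,\dots .$$ Define $$R = \frac{\tau}{2}E + \sigma^2\tau^3 A_1A_2 + \frac{\tau^2}{4}(2\sigma-1)A,$$ $$\mathcal{E}_{n} = \left\|\frac{y^{n}+y^{n-1}}{2}\right\|_A^2 + \left\|\frac{y^{n}-y^{n-1}}{\tau}\right\|_{R}^2 ,\quad n\ge 1.$$ Then $R$ is self-adjoint and positive definite (so $\mathcal{E}_n$ is a squared norm of the pair of consecutive levels), $E+\sigma\tau A$ is self-adjoint positive definite, and for every $n\ge1$, regardless of $\tau$, $$\mathcal{E}_{n+1} \le \mathcal{E}_n + \frac{\tau}{2}\,\|\varphi^n\|^2_{(E+\sigma\tau A)^{-1}} .$$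
   Context: $H$ has scalar product $(\cdot,\cdot)$ and norm $\|y\|=(y,y)^{1/2}$; $A^*$ denotes the adjoint. For a self-adjoint positive definite operator $D$ on $H$, $\|y\|_D = (Dy,y)^{1/2}$; in particular $\|\varphi\|^2_{(E+\sigma\tau A)^{-1}} = ((E+\sigma\tau A)^{-1}\varphi,\varphi)$. $E$ denotes the identity operator on $H$. *)

(* Defs.v *)
(* H = 'cV[R]_d (column vectors) with the standard inner product,
   over an arbitrary real field R (every finite-dimensional real Hilbert space
   is isometric to such a space). *)
From HB Require Import structures.
From mathcomp Require Import all_boot all_order all_algebra.
Set Implicit Arguments. Unset Strict Implicit. Unset Printing Implicit Defensive.
Import Order.TTheory GRing.Theory Num.Theory.
Local Open Scope ring_scope.

Definition ip (R : realFieldType) (d : nat) (x y : 'cV[R]_d) : R := (x^T *m y) 0 0.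

Definition sqnormD (R : realFieldType) (d : nat) (D : 'M[R]_d) (y : 'cV[R]_d) : R :=
  ip (D *m y) y.

(* self-adjoint (D^* = D, adjoint = transpose for the standard scalar product)
   and positive definite *)
Definition selfadj_posdef (R : realFieldType) (d : nat) (D : 'M[R]_d) : Prop :=
  D^T = D /\ forall v : 'cV[R]_d, v != 0 -> 0 < ip (D *m v) v.

(* Main.v *)
Require Import Defs.
From HB Require Import structures.
From mathcomp Require Import all_boot all_order all_algebra ring lra.
Import Order.TTheory GRing.Theory Num.Theory.
Local Open Scope ring_scope.

Section IP.
Variables (R : realFieldType) (d : nat).
Implicit Types (x y z : 'cV[R]_d) (M : 'M[R]_d) (a : R).

Lemma ipDl x y z : ip (x + y) z = ip x z + ip y z.
Proof. by rewrite /ip linearD mulmxDl mxE. Qed.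
Lemma ipDr x y z : ip z (x + y) = ip z x + ip z y.
Proof. by rewrite /ip mulmxDr mxE. Qed.
Lemma ipZl a x y : ip (a *: x) y = a * ip x y.
Proof. by rewrite /ip linearZ /= -scalemxAl mxE. Qed.
Lemma ipZr a x y : ip x (a *: y) = a * ip x y.
Proof. by rewrite /ip -scalemxAr mxE. Qed.
Lemma ipNl x y : ip (- x) y = - ip x y.
Proof. by rewrite -scaleN1r ipZl mulN1r. Qed.
Lemma ipNr x y : ip x (- y) = - ip x y.
Proof. by rewrite -scaleN1r ipZr mulN1r. Qed.
Lemma ipBl x y z : ip (x - y) z = ip x z - ip y z.
Proof. by rewrite ipDl ipNl. Qed.
Lemma ipBr x y z : ip z (x - y) = ip z x - ip z y.
Proof. by rewrite ipDr ipNr. Qed.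
Lemma ipC x y : ip x y = ip y x.
Proof.
by rewrite /ip -[in LHS](trmxK (x^T *m y)) mxE trmx_mul trmxK.
Qed.
Lemma ipM M x y : ip (M *m x) y = ip x (M^T *m y).
Proof. by rewrite /ip trmx_mul mulmxA. Qed.
Lemma ipMs M x y : M^T = M -> ip (M *m x) y = ip (M *m y) x.
Proof. by move=> hM; rewrite ipM hM ipC. Qed.
Lemma ip_ge0 x : 0 <= ip x x.
Proof.
rewrite /ip mxE; apply: sumr_ge0 => i _; rewrite mxE -expr2; exact: sqr_ge0.
Qed.
Lemma ip_gt0 x : x != 0 -> 0 < ip x x.
Proof.
move=> hx; rewrite lt_def ip_ge0 andbT; apply: contra hx => /eqP h0.
apply/eqP/matrixP => i j; rewrite ord1 mxE.
move: h0; rewrite /ip mxE => h0.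
have := psumr_eq0P _ h0 (i := i) isT.
rewrite mxE -expr2 => /(_ _)/eqP; rewrite sqrf_eq0 => /(_ _)/eqP -> //.
by move=> k _; rewrite mxE -expr2 sqr_ge0.
Qed.

Lemma ip0l y : ip (0 : 'cV[R]_d) y = 0.
Proof. by rewrite -(scale0r (0 : 'cV[R]_d)) ipZl mul0r. Qed.

Lemma posdef_ge0 x M : selfadj_posdef M -> 0 <= ip (M *m x) x.
Proof.
move=> [_ hM]; have [->|hx] := eqVneq x 0; first by rewrite mulmx0 ip0l.
exact/ltW/hM.
Qed.

Lemma posdef_unit M : selfadj_posdef M -> M \in unitmx.
Proof.
move=> hM; rewrite -row_free_unit; apply: inj_row_free => v hv.
have h0 : M *m v^T = 0 by rewrite -{1}hM.1 -trmx_mul hv linear0.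
apply/eqP; rewrite -trmx_eq0; apply/negPn/negP => hnz.
by have := hM.2 _ hnz; rewrite h0 ip0l ltxx.
Qed.

Lemma cs_ineq M (t : R) (phi s : 'cV[R]_d) : selfadj_posdef M -> 0 < t ->
  t * ip phi s - t / 2%:R * ip (M *m s) s <= t / 2%:R * ip (invmx M *m phi) phi.
Proof.
move=> hM ht; set z := invmx M *m phi.
have hz : M *m z = phi by rewrite /z mulKVmx //; exact: posdef_unit.
have := @posdef_ge0 (s - z) M hM.
rewrite mulmxBr hz ipBl !ipBr (@ipMs M s z hM.1) hz (ipC phi z) => h.
have h2 : 0 <= t / 2%:R * (ip (M *m s) s - ip phi s - (ip phi s - ip z phi)).
  by apply: mulr_ge0 => //; apply: divr_ge0; [exact: ltW|].
lra.
Qed.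
End IP.
Theorem theorem3 (R : realFieldType) (d : nat)
  (A1 A2 : 'M[R]_d) (sigma tau : R) (y phi : nat -> 'cV[R]_d)
  (hadj : A1 = A2^T)
  (hA : selfadj_posdef (A1 + A2))
  (hsigma : 2^-1 <= sigma) (htau : 0 < tau)
  (hscheme : forall n : nat, (1 <= n)%N ->
     (1%:M + (sigma * tau) *: (A1 + A2)) *m (tau^-1 *: (y n.+1 - y n))
     + (sigma ^+ 2 * tau ^+ 3) *: (A1 *m A2)
         *m ((tau ^+ 2)^-1 *: (y n.+1 - 2%:R *: y n + y n.-1))
     + (A1 + A2) *m y n = phi n) :
  let A := A1 + A2 in
  let B := 1%:M + (sigma * tau) *: A in
  let Rop := (tau / 2%:R)%:M + (sigma ^+ 2 * tau ^+ 3) *: (A1 *m A2)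
             + (tau ^+ 2 / 4%:R * (2%:R * sigma - 1)) *: A in
  let energy := fun n : nat =>
     sqnormD A (2^-1 *: (y n + y n.-1)) + sqnormD Rop (tau^-1 *: (y n - y n.-1)) in
  selfadj_posdef Rop /\ selfadj_posdef B /\
  forall n : nat, (1 <= n)%N ->
    energy n.+1 <= energy n + tau / 2%:R * ip (invmx B *m phi n) (phi n).
Proof.
move=> A B Rop energy.
have hAt : A^T = A := hA.1.
have hC : (A1 *m A2)^T = A1 *m A2 by rewrite trmx_mul hadj trmxK.
have hC0 : forall v, 0 <= ip ((A1 *m A2) *m v) v.
  by move=> v; rewrite -mulmxA ipM hadj trmxK ip_ge0.
have hA0 : forall v, 0 <= ip (A *m v) v by move=> v; exact: posdef_ge0.
have hk : 0 <= sigma ^+ 2 * tau ^+ 3 by apply: mulr_ge0; rewrite ?sqr_ge0 ?exprn_ge0 ?ltW.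
have hm : 0 <= tau ^+ 2 / 4%:R * (2%:R * sigma - 1).
  apply: mulr_ge0; first by apply: divr_ge0; rewrite ?sqr_ge0.
  have : (2%:R * 2^-1 : R) = 1 by rewrite divff // pnatr_eq0.
  move=> h2; lra.
have hRop : selfadj_posdef Rop.
  split; first by rewrite /Rop linearD /= linearD /= !linearZ /= tr_scalar_mx hC hAt.
  move=> v hv; rewrite /Rop !mulmxDl -!scalemxAl mul_scalar_mx !ipDl !ipZl.
  have := @ip_gt0 _ _ v hv; have := hC0 v; have := hA0 v => h1 h2 h3.
  have h4 : 0 < tau / 2%:R * ip v v by apply: mulr_gt0 => //; apply: divr_gt0.
  have h5 := mulr_ge0 hk h2; have h6 := mulr_ge0 hm h1.
  lra.
have hB : selfadj_posdef B.
  split; first by rewrite /B linearD /= linearZ /= trmx1 hAt.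
  move=> v hv; rewrite /B !mulmxDl -!scalemxAl mul1mx !ipDl !ipZl.
  have := @ip_gt0 _ _ v hv; have := hA0 v => h1 h3.
  have h5 : 0 <= sigma * tau * ip (A *m v) v.
    apply: mulr_ge0 => //; apply: mulr_ge0; last exact: ltW.
    apply: le_trans hsigma; rewrite invr_ge0; exact: ler0n.
  lra.
split => //; split => // n hn.
have := @cs_ineq _ _ B tau (phi n) (tau^-1 *: (y n.+1 - y n.-1)) hB htau.
suff -> : energy n.+1 = energy n + (tau * ip (phi n) (tau^-1 *: (y n.+1 - y n.-1))
   - tau / 2%:R * ip (B *m (tau^-1 *: (y n.+1 - y n.-1))) (tau^-1 *: (y n.+1 - y n.-1))).
  lra.
rewrite -(hscheme n hn) /energy /= /B /Rop /sqnormD.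
rewrite -/A.
move: hAt hC; set C := A1 *m A2; set a := y n.+1; set b := y n; set c := y n.-1.
clearbody A C => hAt hC.
do 4 rewrite ?mulmxDl ?mulmxDr ?mulmxN -?scalemxAl -?scalemxAr ?mul_scalar_mx ?mul1mx.
rewrite !(ipDl, ipDr, ipNl, ipNr, ipZl, ipZr).
rewrite ?(@ipMs _ _ A b a hAt) ?(@ipMs _ _ A c a hAt) ?(@ipMs _ _ A c b hAt).
rewrite ?(@ipMs _ _ C b a hC) ?(@ipMs _ _ C c a hC) ?(@ipMs _ _ C c b hC).
rewrite (@ipC _ _ b a) (@ipC _ _ c a) (@ipC _ _ c b).
have ht0 : tau != 0 by rewrite gt_eqF.
field.
all: try by rewrite ?ht0 ?pnatr_eq0.
Qed.
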